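(* Let $\mu\in\mathbb{R}^J$ and let $\Lambda\in\mathbb{R}^{J\times J}$ be a symmetric positive semidefinite matrix satisfying (i) $2\sum_{s=1}^J\Lambda_{rs}\ge\Lambda_{rr}$ for all $r\in[J]$, and (ii) $\Lambda_{rs}\le 0$ for all $r,s\in[J]$ with $r\ne s$. Then the function $g:\{0,1\}^J\to\mathbb{R}$, $g(y)=\mu^{\top}y+\sqrt{y^{\top}\Lambda y}$, is submodular.
   Context: $[J]=\{1,\dots,J\}$. A vector $y\in\{0,1\}^J$ is identified with the subset $R=\{j: y_j=1\}\subseteq[J]$. A set function $h$ on subsets of $[J]$ is submodular if $h(R\cup\{j\})-h(R)\ge h(S\cup\{j\})-h(S)$ for all $R\subseteq S\subseteq[J]$ and all $j\in[J]\setminus S$. *)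

(* Defs.v *)
From HB Require Import structures.
From mathcomp Require Import all_boot all_order all_algebra.
From mathcomp Require Import reals.
Set Implicit Arguments. Unset Strict Implicit. Unset Printing Implicit Defensive.
Import Order.TTheory GRing.Theory Num.Theory.
Local Open Scope ring_scope.

Definition indic (R : realType) (J : nat) (S : {set 'I_J}) : 'cV[R]_J :=
  \col_(j < J) (if j \in S then 1 else 0).

Definition submodular (R : realType) (J : nat) (h : {set 'I_J} -> R) : Prop :=
  forall (A B : {set 'I_J}) (j : 'I_J),
    A \subset B -> j \notin B ->
    h (j |: A) - h A >= h (j |: B) - h B.

Definition psd (R : realType) (J : nat) (L : 'M[R]_J) : Prop :=
  forall x : 'cV[R]_J, 0 <= (x^T *m L *m x) 0 0.

(* g(y) = mu^T y + sqrt(y^T Λ y), viewed as a set function. *)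
Definition gfun (R : realType) (J : nat) (mu : 'cV[R]_J) (L : 'M[R]_J)
  (S : {set 'I_J}) : R :=
  (mu^T *m indic R S) 0 0 + Num.sqrt (((indic R S)^T *m L *m indic R S) 0 0).

(* Main.v *)
Require Import Defs.
From HB Require Import structures.
From mathcomp Require Import all_boot all_order all_algebra.
From mathcomp Require Import reals.
From mathcomp Require Import ring lra.
Import Order.TTheory GRing.Theory Num.Theory.
Local Open Scope ring_scope.

Lemma sq (R : realType) (qa qb da db : R) : 0 <= qa -> qa <= qb -> 0 <= db -> db <= da ->
  Num.sqrt (qb + db) - Num.sqrt qb <= Num.sqrt (qa + da) - Num.sqrt qa.
Proof.
move=> h1 h2 h3 h4.
have ea := sqr_sqrtr h1.
have eb := sqr_sqrtr (le_trans h1 h2).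
have ec : Num.sqrt (qa+db) ^+2 = qa + db by rewrite sqr_sqrtr // addr_ge0.
have ee : Num.sqrt (qb+db) ^+2 = qb + db by rewrite sqr_sqrtr // addr_ge0 // (le_trans h1 h2).
have ed : Num.sqrt (qa+da) ^+2 = qa + da by rewrite sqr_sqrtr // addr_ge0 // (le_trans h3 h4).
have cd : Num.sqrt (qa+db) <= Num.sqrt (qa+da) by rewrite ler_wsqrtr // lerD2l.
have ab : Num.sqrt qa <= Num.sqrt qb by rewrite ler_wsqrtr.
have ce : Num.sqrt (qa+db) <= Num.sqrt (qb+db) by rewrite ler_wsqrtr // lerD2r.
have := sqrtr_ge0 qa; have := sqrtr_ge0 qb; have := sqrtr_ge0 (qa+db); have := sqrtr_ge0 (qb+db).
move: ea eb ec ee cd ab ce.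
set a := Num.sqrt qa; set b := Num.sqrt qb; set c := Num.sqrt (qa+db); set e := Num.sqrt (qb+db); set d := Num.sqrt (qa+da).
move=> ea eb ec ee cd ab ce g1 g2 g3 g4.
suff : e + a <= c + b by lra.

have ca : a <= c by rewrite /a /c ler_wsqrtr // lerDl.
have H : (e+b)*((e-b)-(c-a)) <= 0.
  have -> : (e+b)*((e-b)-(c-a)) = (e^+2 - b^+2) - (c^+2 - a^+2) - (c-a)*(e+b-(c+a)) by ring.
  rewrite ee eb ec ea. have : 0 <= (c-a)*(e+b-(c+a)) by apply: mulr_ge0; lra.
  lra.
have [/eqP z|nz] := eqVneq (e+b) 0.
  have e0 : e = 0 by lra. have b0 : b = 0 by lra. lra.
have pos : 0 < e + b by rewrite lt_def nz; lra.
rewrite pmulr_rle0 // in H. lra.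
Qed.

Section Main.
Variables (R : realType) (J : nat) (mu : 'cV[R]_J) (L : 'M[R]_J).

Definition Q (S : {set 'I_J}) : R := \sum_(i in S) \sum_(k in S) L k i.

Lemma linE S : (mu^T *m indic R S) 0 0 = \sum_(i in S) mu i 0.
Proof.
rewrite !mxE [RHS]big_mkcond /=; apply: eq_bigr => i _; rewrite !mxE.
by case: (i \in S); rewrite ?mulr1 ?mulr0.
Qed.

Lemma quadE S : ((indic R S)^T *m L *m indic R S) 0 0 = Q S.
Proof.
rewrite !mxE /Q [RHS]big_mkcond /=; apply: eq_bigr => i _; rewrite !mxE.
case: (i \in S); rewrite ?mulr1 ?mulr0 //. idtac.
rewrite [RHS]big_mkcond /=; apply: eq_bigr => k _; rewrite !mxE.
by case: (k \in S); rewrite ?mul1r ?mul0r.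
Qed.

Hypothesis Lsym : L^T = L.
Hypothesis Hrow : forall r : 'I_J, 2 * (\sum_(s < J) L r s) >= L r r.
Hypothesis Hoff : forall r s : 'I_J, r != s -> L r s <= 0.

Lemma Lsym' i k : L k i = L i k.
Proof. by rewrite -{1}Lsym mxE. Qed.

Lemma sumU1 (j : 'I_J) (S : {set 'I_J}) (F : 'I_J -> R) : j \notin S ->
  \sum_(i in j |: S) F i = F j + \sum_(i in S) F i.
Proof. by move=> jS; rewrite big_setU1. Qed.

Definition dd (j : 'I_J) (S : {set 'I_J}) := L j j + 2 * \sum_(k in S) L j k.

Lemma QU (j : 'I_J) (S : {set 'I_J}) : j \notin S -> Q (j |: S) = Q S + dd j S.
Proof.
move=> jS; rewrite /Q /dd.
under eq_bigr => i _ do rewrite sumU1 //.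
rewrite sumU1 // big_split /=.
have -> : \sum_(i in S) L i j = \sum_(k in S) L j k by apply: eq_bigr => i _; rewrite Lsym'.
lra.
Qed.

Lemma sum_anti (j : 'I_J) (A B : {set 'I_J}) : A \subset B -> j \notin B ->
  \sum_(k in B) L j k <= \sum_(k in A) L j k.
Proof.
move=> AB jB; rewrite (big_setID A) /= (setIidPr AB) gerDl.
apply: sumr_le0 => k; rewrite in_setD => /andP[_ kB].
apply: Hoff; apply: contraNneq jB => ->; exact: kB.
Qed.

Lemma dd_ge0 (j : 'I_J) (S : {set 'I_J}) : j \notin S -> 0 <= dd j S.
Proof.
move=> jS; rewrite /dd.
have sub : S \subset ~: [set j].
  by apply/subsetP => k kS; rewrite in_setC in_set1; apply: contraNneq jS => <-.
have H := @sum_anti j S (~: [set j]) sub.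
rewrite in_setC in_set1 eqxx /= in H.
have {}H := H isT.
have := Hrow j; rewrite (bigD1 j) //=.
have -> : \sum_(i < J | i != j) L j i = \sum_(k in ~: [set j]) L j k.
  by apply: eq_bigl => k; rewrite in_setC in_set1.
lra.
Qed.

Lemma Q_mono_step (j : 'I_J) (S : {set 'I_J}) : j \notin S -> Q S <= Q (j |: S).
Proof. by move=> jS; rewrite QU // lerDl dd_ge0. Qed.

Lemma Q_mono (A B : {set 'I_J}) : A \subset B -> Q A <= Q B.
Proof.
move: {2}#|B :\: A| (erefl #|B :\: A|) => n; elim: n B => [|n IH] B.
  move/eqP; rewrite cards_eq0 setD_eq0 => BA AB.
  by rewrite (_ : A = B) // ; apply/eqP; rewrite eqEsubset AB BA.
move=> hc AB.
have : (0 < #|B :\: A|)%N by rewrite hc.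
case/card_gt0P => k; rewrite in_setD => /andP[kA kB].
have eB : B = k |: (B :\ k) by rewrite setD1K.
have AB' : A \subset B :\ k.
  by apply/subsetP => x xA; rewrite in_setD1 (subsetP AB) // andbT; apply: contraNneq kA => <-.
apply: le_trans (IH (B :\ k) _ AB') _.
  have e2 : (B :\ k) :\: A = (B :\: A) :\ k.
    by apply/setP => x; rewrite !inE; case: (x == k); rewrite ?andbF.
  rewrite e2; move: hc; rewrite (cardsD1 k (B :\: A)) in_setD kA kB /=.
  by rewrite add1n => -[].
by rewrite {2}eB; apply: Q_mono_step; rewrite !inE eqxx.
Qed.

End Main.

Theorem proposition1 (R : realType) (J : nat) (mu : 'cV[R]_J) (L : 'M[R]_J) :
  L^T = L ->
  psd L ->
  (forall r : 'I_J, 2 * (\sum_(s < J) L r s) >= L r r) ->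
  (forall r s : 'I_J, r != s -> L r s <= 0) ->
  submodular (gfun mu L).
Proof.
move=> Ls Hp Hr Ho A B j AB jB.
have jA : j \notin A by apply: contra jB; apply: (subsetP AB).
rewrite /gfun !linE !quadE (@QU _ _ _ Ls _ _ jA) (@QU _ _ _ Ls _ _ jB) (@sumU1 _ _ _ _ _ jA) (@sumU1 _ _ _ _ _ jB).
have qa : 0 <= Q _ _ L A by rewrite -quadE; apply: Hp.
have qab : Q _ _ L A <= Q _ _ L B by exact: (@Q_mono _ _ _ Ls Hr Ho _ _ AB).
have db0 : 0 <= dd _ _ L j B by exact: (@dd_ge0 _ _ _ Hr Ho _ _ jB).
have dab : dd _ _ L j B <= dd _ _ L j A.
  rewrite /dd lerD2l ler_pM2l ?ltr0n //; exact: (@sum_anti _ _ _ Ho _ _ _ AB jB).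
have := @sq _ _ _ _ _ qa qab db0 dab.
lra.
Qed.
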